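(* Let $(\lambda_1,u_1)$ and $(\lambda_2,u_2)$ be two solution pairs of the system $(PAP-\lambda I)u=-b_0$, $\|u\|=\gamma$, $u\in\mathcal N(C^{\top})$, and let $f(u)=u^{\top}PAPu+2u^{\top}b_0$. Then $\lambda_1<\lambda_2$ if and only if $f(u_1)<f(u_2)$.
   Context: Let $A\in\mathbb{R}^{n\times n}$ be symmetric, $C\in\mathbb{R}^{n\times m}$ ($m<n$) full column rank, $b\in\mathbb{R}^m$, $n_0=C(C^{\top}C)^{-1}b$ with $\|n_0\|<1$, $\gamma=\sqrt{1-\|n_0\|^2}$, $P=I-C(C^{\top}C)^{-1}C^{\top}$ (orthogonal projector onto $\mathcal N(C^{\top})$), $b_0=PAn_0$. *)

(* Defs.v *)
From HB Require Import structures.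
From mathcomp Require Import all_boot all_order all_algebra.
Set Implicit Arguments. Unset Strict Implicit. Unset Printing Implicit Defensive.
Import Order.TTheory GRing.Theory Num.Theory.
Local Open Scope ring_scope.

Section Defs.
Variable R : rcfType.

Definition dotv k (u v : 'cV[R]_k) : R := (u^T *m v) 0 0.
Definition normv k (u : 'cV[R]_k) : R := Num.sqrt (dotv u u).

Definition n0v n m (C : 'M[R]_(n, m)) (b : 'cV[R]_m) : 'cV[R]_n :=
  C *m invmx (C^T *m C) *m b.

Definition gam n m (C : 'M[R]_(n, m)) (b : 'cV[R]_m) : R :=
  Num.sqrt (1 - normv (n0v C b) ^+ 2).

Definition Pproj n m (C : 'M[R]_(n, m)) : 'M[R]_n :=
  1%:M - C *m invmx (C^T *m C) *m C^T.

Definition b0v n m (A : 'M[R]_n) (C : 'M[R]_(n, m)) (b : 'cV[R]_m) : 'cV[R]_n :=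
  Pproj C *m A *m n0v C b.

Definition fobj n m (A : 'M[R]_n) (C : 'M[R]_(n, m)) (b : 'cV[R]_m)
  (u : 'cV[R]_n) : R :=
  dotv u (Pproj C *m A *m Pproj C *m u) + 2 * dotv u (b0v A C b).

Definition is_sol n m (A : 'M[R]_n) (C : 'M[R]_(n, m)) (b : 'cV[R]_m)
  (lam : R) (u : 'cV[R]_n) : Prop :=
  [/\ (Pproj C *m A *m Pproj C - lam%:M) *m u = - b0v A C b,
      normv u = gam C b &
      C^T *m u = 0].
End Defs.

(* Main.v *)
Require Import Defs.
From HB Require Import structures.
From mathcomp Require Import all_boot all_order all_algebra.
From mathcomp Require Import ring lra.
Import Order.TTheory GRing.Theory Num.Theory.
Local Open Scope ring_scope.

Section H.
Variable R : rcfType.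

Lemma dotv_sum k (u v : 'cV[R]_k) : dotv u v = \sum_i u i 0 * v i 0.
Proof. by rewrite /dotv mxE; apply: eq_bigr => i _; rewrite mxE. Qed.

Lemma dotvC k (u v : 'cV[R]_k) : dotv u v = dotv v u.
Proof. by rewrite !dotv_sum; apply: eq_bigr => i _; rewrite mulrC. Qed.

Lemma dotvDr k (u v w : 'cV[R]_k) : dotv u (v + w) = dotv u v + dotv u w.
Proof. by rewrite /dotv mulmxDr mxE. Qed.

Lemma dotvNr k (u v : 'cV[R]_k) : dotv u (- v) = - dotv u v.
Proof. by rewrite /dotv mulmxN mxE. Qed.

Lemma dotvZr k (u v : 'cV[R]_k) a : dotv u (a *: v) = a * dotv u v.
Proof. by rewrite /dotv -scalemxAr mxE. Qed.

Lemma dotvM k (u v : 'cV[R]_k) (M : 'M[R]_k) : dotv u (M *m v) = dotv (M^T *m u) v.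
Proof. by rewrite /dotv trmx_mul trmxK mulmxA. Qed.

Lemma dotv_ge0 k (u : 'cV[R]_k) : 0 <= dotv u u.
Proof. by rewrite dotv_sum; apply: sumr_ge0 => i _; rewrite -expr2 sqr_ge0. Qed.

Lemma dotv_eq0 k (u : 'cV[R]_k) : dotv u u = 0 -> u = 0.
Proof.
rewrite dotv_sum => /psumr_eq0P H.
have {}H := H (fun l _ => ltac:(rewrite -expr2; exact: sqr_ge0)).
apply/matrixP => i j; rewrite (ord1 j) mxE.
by have := H i isT => /eqP; rewrite mulf_eq0 orbb => /eqP.
Qed.

Lemma Psym n m (C : 'M[R]_(n, m)) : (Pproj C)^T = Pproj C.
Proof.
rewrite /Pproj linearB /= trmx1 !trmx_mul trmxK trmx_inv trmx_mul trmxK.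
by rewrite mulmxA.
Qed.
End H.
Arguments dotvC {R k}.
Arguments dotv_ge0 {R k}.
Arguments dotv_eq0 {R k}.

Theorem lemma2p1 (R : rcfType) (n m : nat) (A : 'M[R]_n) (C : 'M[R]_(n, m))
  (b : 'cV[R]_m) (lam1 lam2 : R) (u1 u2 : 'cV[R]_n) :
  (m < n)%N ->
  A^T = A ->
  \rank C = m ->
  normv (n0v C b) < 1 ->
  is_sol A C b lam1 u1 ->
  is_sol A C b lam2 u2 ->
  (lam1 < lam2) <-> (fobj A C b u1 < fobj A C b u2).
Proof.
move=> _ AT _ hn [e1 n1 _] [e2 n2 _].
rewrite /fobj.
set M := Pproj C *m A *m Pproj C in e1 e2 *.
set bb := b0v A C b in e1 e2 *.
have MT : M^T = M by rewrite /M !trmx_mul Psym AT mulmxA.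
have Mu : forall lam u, (M - lam%:M) *m u = - bb -> M *m u = lam *: u - bb.
  move=> lam u; rewrite mulmxBl mul_scalar_mx => <-.
  by rewrite addrC subrK.
move/Mu: e1 => e1; move/Mu: e2 => e2.
have gpos : forall u : 'cV[R]_n, normv u = gam C b -> dotv u u = 1 - normv (n0v C b) ^+ 2.
  move=> u; rewrite /gam /normv => h.
  have hu := @dotv_ge0 R n u.
  rewrite -(sqr_sqrtr hu) h sqr_sqrtr //.
  rewrite subr_ge0; apply: ltW; rewrite expr_lt1 //.
  exact: sqrtr_ge0.
have g0 : 0 < 1 - normv (n0v C b) ^+ 2.
  rewrite subr_gt0 expr_lt1 //; exact: sqrtr_ge0.
have G1 := gpos _ n1; have G2 := gpos _ n2.
set g := 1 - _ in G1 G2 g0.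
rewrite e1 e2 !dotvDr !dotvNr !dotvZr G1 G2.
have E3 : dotv u1 (M *m u2) = dotv u2 (M *m u1) by rewrite dotvM MT dotvC.
rewrite e1 e2 !dotvDr !dotvNr !dotvZr (dotvC u2 u1) in E3.
have Q : dotv (u1 - u2) (u1 - u2) = g + g - 2 * dotv u1 u2.
  rewrite !dotvDr !dotvNr (dotvC (u1 - u2)) (dotvC (u1 - u2) u2) !dotvDr !dotvNr G1 G2 (dotvC u2 u1).
  by rewrite mulr2n; ring.
have := dotv_ge0 (u1 - u2); rewrite le_eqVlt => /orP[/eqP q0|qp].
  move/esym: q0 => /dotv_eq0 /eqP; rewrite subr_eq0 => /eqP ee.
  subst u2.
  have : (lam1 - lam2) * g = 0.
    have := congr1 (dotv u1) e1; rewrite e2 !dotvDr !dotvNr !dotvZr G1 => h.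
    rewrite mulrBl; apply/eqP; rewrite subr_eq0; apply/eqP; by move: h => /(congr1 (fun x => x + dotv u1 bb)); rewrite !subrK.
  move/eqP; rewrite mulf_eq0 (gt_eqF g0) orbF subr_eq0 => /eqP ->.
  by rewrite !ltxx.
rewrite Q in qp.
split => h; nra.
Qed.
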